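(* Let $R$ be a commutative ring such that the Picard group of its total ring of fractions $T(R)$ is trivial. Then every invertible $R$-module $M$ has avoidance: if $M=\bigcup_{k=1}^n M_k$ for finitely many $R$-submodules $M_k$ of $M$, then $M=M_k$ for some $k$.
   Context: All rings are commutative with $1\neq 0$. An $R$-module $M$ is invertible if there is an $R$-module $N$ with $M\otimes_R N\cong R$ (equivalently, $M$ is finitely generated projective of constant rank 1). An $R$-module $M$ has avoidance if whenever $M$ equals a finite union of $R$-submodules, it equals one of them. *)

(* Defs.v *)
From HB Require Import structures.
From mathcomp Require Import all_boot all_order all_algebra.
Set Implicit Arguments. Unset Strict Implicit. Unset Printing Implicit Defensive.
Import GRing.Theory.
Local Open Scope ring_scope.

Definition nonzerodivisor (R : comNzRingType) (s : R) : Prop :=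
  forall a : R, s * a = 0 -> a = 0.

(* (T, iota) is the total ring of fractions T(R) = S^{-1} R, S = non-zero-divisors,
   given by the standard characterization of the localization map:
   elements of S become units, ker iota = {a | exists s in S, s a = 0} (= 0),
   and every element of T is iota a / iota s with s in S. *)
Definition is_total_ring_of_fractions (R T : comNzRingType)
    (iota : {rmorphism R -> T}) : Prop :=
  [/\ (forall s : R, nonzerodivisor s -> exists u : T, iota s * u = 1),
      (forall a : R, iota a = 0 -> exists2 s : R, nonzerodivisor s & s * a = 0)
    & (forall t : T, exists a s : R, nonzerodivisor s /\ t * iota s = iota a)].

Definition bilinear_map (R : comNzRingType) (M N P : lmodType R)
    (phi : M -> N -> P) : Prop :=
  (forall (a : R) (m1 m2 : M) (n : N),
      phi (a *: m1 + m2) n = a *: phi m1 n + phi m2 n) /\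
  (forall (a : R) (m : M) (n1 n2 : N),
      phi m (a *: n1 + n2) = a *: phi m n1 + phi m n2).

Definition linear_map (R : comNzRingType) (M P : lmodType R) (h : M -> P) : Prop :=
  forall (a : R) (x y : M), h (a *: x + y) = a *: h x + h y.

Definition is_tensor_product (R : comNzRingType) (M N Q : lmodType R)
    (beta : M -> N -> Q) : Prop :=
  bilinear_map beta /\
  forall (P : lmodType R) (phi : M -> N -> P), bilinear_map phi ->
    (exists h : Q -> P, linear_map h /\ forall m n, phi m n = h (beta m n)) /\
    (forall h1 h2 : Q -> P, linear_map h1 -> linear_map h2 ->
       (forall m n, h1 (beta m n) = phi m n) ->
       (forall m n, h2 (beta m n) = phi m n) -> forall q, h1 q = h2 q).

(* M is invertible: there is N with M (x)_R N isomorphic to R,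
   i.e. R itself (as the regular module R^o) is a tensor product of M and N. *)
Definition invertible_module (R : comNzRingType) (M : lmodType R) : Prop :=
  exists (N : lmodType R) (beta : M -> N -> R^o), is_tensor_product beta.

Definition isomorphic_modules (R : comNzRingType) (M N : lmodType R) : Prop :=
  exists (f : M -> N) (g : N -> M),
    [/\ linear_map f, cancel f g & cancel g f].

Definition trivial_Picard_group (R : comNzRingType) : Prop :=
  forall M : lmodType R, invertible_module M -> isomorphic_modules M R^o.

Definition has_avoidance (R : comNzRingType) (M : lmodType R) : Prop :=
  forall (n : nat) (Mk : 'I_n -> {pred M}),
    (forall k, submod_closed (Mk k)) ->
    (forall x : M, exists k, x \in Mk k) ->
    exists k, forall x : M, x \in Mk k.

(* Main.v *)
Require Import Defs.
From HB Require Import structures.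
From mathcomp Require Import all_boot all_order all_algebra.
From mathcomp Require Import boolp classical_sets.
From mathcomp Require Import ring.
Set Implicit Arguments. Unset Strict Implicit. Unset Printing Implicit Defensive.
Import GRing.Theory.
Local Open Scope ring_scope.
Local Open Scope classical_set_scope.


Definition ideal (R : comNzRingType) (I : R -> Prop) :=
  [/\ I 0, (forall x y, I x -> I y -> I (x + y)) & (forall r x, I x -> I (r * x))].

Definition maxideal (R : comNzRingType) (m : R -> Prop) :=
  [/\ ideal m, ~ m 1 &
    forall I : R -> Prop, ideal I -> (forall x, m x -> I x) -> ~ I 1 ->
      forall x, I x -> m x].

Lemma ideal_ext (R : comNzRingType) (I J : R -> Prop) :
  ideal I -> (forall x, I x <-> J x) -> ideal J.
Proof.
move=> [I0 ID IM] E; split.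
- exact/E.
- by move=> x y /E Ix /E Iy; apply/E; apply: ID.
- by move=> r x /E Ix; apply/E; apply: IM.
Qed.

Lemma idealB (R : comNzRingType) (I : R -> Prop) :
  ideal I -> forall a b, I a -> I b -> I (a - b).
Proof.
move=> [I0 ID IM] a b Ia Ib; apply: ID => //.
by rewrite -mulN1r; apply: IM.
Qed.

Lemma exists_max (R : comNzRingType) (C : R -> Prop) :
  ideal C -> ~ C 1 -> exists m, maxideal m /\ forall x, C x -> m x.
Proof.
move=> iC nC1.
pose P (A : set R) := ideal (fun x => A x \/ C x) /\ ~ (A 1 \/ C 1).
have [A [[iA nA1] Amax]] : exists A, P A /\ forall B, A `<` B -> ~ P B.
  apply: Zorn_bigcup => F FP Ftot; split.
  - case: iC => C0 CD CM; split.
    + by right.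
    + move=> x y [[X FX Xx]|Cx] [[Y FY Yy]|Cy].
      * have [XY|YX] := Ftot X Y FX FY.
        - have [[_ XD _] _] := FP Y FY.
          case: (XD x y (or_introl (XY x Xx)) (or_introl Yy)) => H.
          + by left; exists Y.
          + by right.
        - have [[_ XD _] _] := FP X FX.
          case: (XD x y (or_introl Xx) (or_introl (YX y Yy))) => H.
          + by left; exists X.
          + by right.
      * have [[_ XD _] _] := FP X FX.
        case: (XD x y (or_introl Xx) (or_intror Cy)) => H.
        + by left; exists X.
        + by right.
      * have [[_ XD _] _] := FP Y FY.
        case: (XD x y (or_intror Cx) (or_introl Yy)) => H.
        + by left; exists Y.
        + by right.
      * by right; apply: CD.
    + move=> r x [[X FX Xx]|Cx].
      * have [[_ _ XM] _] := FP X FX.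
        case: (XM r x (or_introl Xx)) => H.
        + by left; exists X.
        + by right.
      * by right; apply: CM.
  - move=> [[X FX X1]|C1] //.
    by have [_ []] := FP X FX; left.
exists (fun x => A x \/ C x); split; last by move=> x Cx; right.
split => //.
move=> I iI AI nI1 x Ix; apply: contrapT => nAx.
apply: (Amax I).
- split; first by move=> y Ay; apply: AI; left.
  by move=> IA; apply: nAx; left; apply: IA.
- split.
  + apply: (ideal_ext iI) => y; split; first by left.
    by case=> // Cy; apply: AI; right.
  + by case=> // C1; apply: nI1; apply: AI; right.
Qed.

Lemma max_prime (R : comNzRingType) (m : R -> Prop) :
  maxideal m -> forall a b, ~ m a -> ~ m b -> ~ m (a * b).
Proof.
move=> [[m0 mD mM] nm1 mmax].
have gen a : ~ m a -> exists r y, m y /\ 1 = r * a + y.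
  move=> na; apply: contrapT => nex.
  pose J x := exists r y, m y /\ x = r * a + y.
  have iJ : ideal J.
    split.
    - by exists 0, 0; rewrite mul0r addr0.
    - move=> x y [r1 [y1 [m1 ->]]] [r2 [y2 [m2 ->]]].
      exists (r1 + r2), (y1 + y2); split; first exact: mD.
      by rewrite mulrDl -!addrA; congr (_ + _); rewrite addrCA.
    - move=> s x [r [y [my ->]]]; exists (s * r), (s * y); split; first exact: mM.
      by rewrite mulrDr mulrA.
  apply: na; apply: (mmax J iJ).
  - by move=> x mx; exists 0, x; rewrite mul0r add0r.
  - by move=> [r [y [my e]]]; apply: nex; exists r, y.
  - by exists 1, 0; rewrite mul1r addr0.
move=> a b na nb mab.
have [r [y [my ea]]] := gen a na.
have [s [z [mz eb]]] := gen b nb.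
apply: nm1.
have -> : (1 : R) = (r * a + y) * (s * b + z) by rewrite -ea -eb mulr1.
have -> : (r * a + y) * (s * b + z) = (r * s) * (a * b) + ((r * a) * z + y * (s * b + z))
  by ring.
apply: (mD); first exact: (mM).
by apply: (mD); [apply: (mM) | rewrite mulrC; apply: (mM)].
Qed.

Lemma max_incl (R : comNzRingType) (m1 m2 : R -> Prop) :
  maxideal m1 -> maxideal m2 -> (forall x, m1 x -> m2 x) -> forall x, m2 x -> m1 x.
Proof. by move=> [_ _ h1] [i2 n2 _] s12; apply: h1. Qed.

Lemma ideal_sum (R : comNzRingType) (I : R -> Prop) (J : Type) (s : seq J) (F : J -> R) :
  ideal I -> (forall j, I (F j)) -> I (\sum_(j <- s) F j).
Proof.
move=> [I0 ID IM] FI; elim: s => [|j s IH]; first by rewrite big_nil.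
by rewrite big_cons; apply: ID.
Qed.

Local Close Scope classical_set_scope.

Section Span.
Variables (R : comNzRingType) (M N : lmodType R) (beta : M -> N -> R^o).

Definition spanP : pred R^o := fun r =>
  `[< exists s : seq (R * M * N), r = \sum_(p <- s) p.1.1 * beta p.1.2 p.2 >].

Lemma spanP_closed : subsemimod_closed spanP.
Proof.
split; [split|].
- by apply/asboolP; exists [::]; rewrite big_nil.
- move=> u v /asboolP[s ->] /asboolP[t ->]; apply/asboolP; exists (s ++ t).
  by rewrite big_cat.
- move=> a u /asboolP[s ->]; apply/asboolP.
  exists [seq (a * p.1.1, p.1.2, p.2) | p <- s].
  rewrite big_map /= [a *: _]/(GRing.scale _ _) /= mulr_sumr.
  by apply: eq_bigr => p _; rewrite mulrA.
Qed.

HB.instance Definition _ := GRing.isSubmodClosed.Build R R^o spanP spanP_closed.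

Inductive spanT : predArgType := SpanT (u : R^o) & u \in spanP.
Definition spanval (x : spanT) := let: SpanT u _ := x in u.
HB.instance Definition _ := [isSub of spanT for spanval].
HB.instance Definition _ := [Choice of spanT by <:].
HB.instance Definition _ := [SubChoice_isSubZmodule of spanT by <:].
HB.instance Definition _ := [SubZmodule_isSubLmodule of spanT by <:].

End Span.

Lemma linR (R : comNzRingType) (P : lmodType R) (h : R^o -> P) :
  linear_map h -> forall a : R, h a = a *: h 1.
Proof.
move=> hl a.
have h0 : h 0 = 0.
  have := hl 1 0 0; rewrite scale1r addr0 => /(congr1 (fun v => v - h 0)).
  by rewrite addrK subrr scale1r => /esym.
by have := hl a 1 0; rewrite addr0 h0 addr0 [a *: (1 : R^o)]/(GRing.scale _ _) /= mulr1.
Qed.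

Lemma span1 (R : comNzRingType) (M N : lmodType R) (beta : M -> N -> R^o) :
  is_tensor_product beta ->
  exists s : seq (R * M * N), 1 = \sum_(p <- s) p.1.1 * beta p.1.2 p.2.
Proof.
move=> [[bl br] univ].
have inS m n : beta m n \in spanP beta.
  by apply/asboolP; exists [:: (1, m, n)]; rewrite big_seq1 /= mul1r.
pose phi m n : spanT beta := SpanT (inS m n).
have bphi : bilinear_map phi.
  split.
  - move=> a m1 m2 n; apply: val_inj; rewrite /= bl.
    by [].
  - move=> a m n1 n2; apply: val_inj; rewrite /= br.
    by [].
have [[h [hl hphi]] _] := univ _ phi bphi.
pose e : R := val (h 1).
have be m n : beta m n = beta m n * e.
  rewrite -[X in X = _]/(val (phi m n)) hphi (linR hl).
  by [].
have [_ uniq] := univ _ beta (conj bl br).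
have e1 : (1 : R^o) = (1 : R^o) * e.
  apply: (uniq id (fun r : R^o => (r * e : R^o))).
  - by move=> a x y.
  - by move=> a x y; rewrite /= mulrDl; congr (_ + _); exact: (esym (mulrA a x e)).
  - by [].
  - by move=> m n; rewrite -be.
rewrite mul1r in e1.
by move/asboolP: (valP (h 1)); rewrite -/e -e1.
Qed.

Lemma wexists (R : comNzRingType) (M N : lmodType R) (beta : M -> N -> R^o) :
  is_tensor_product beta ->
  forall x : M, exists w : M, forall m n, beta x n *: m = beta m n *: w.
Proof.
move=> [[bl br] univ] x.
pose phi (m : M) (n : N) : M := beta x n *: m.
have bphi : bilinear_map phi.
  split.
  - by move=> a m1 m2 n; rewrite /phi scalerDr !scalerA mulrC.
  - by move=> a m n1 n2; rewrite /phi br scalerDl scalerA.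
have [[h [hl hphi]] _] := univ _ phi bphi.
by exists (h 1) => m n; rewrite -(linR hl) -hphi.
Qed.

Lemma subZ (R : comNzRingType) (M : lmodType R) (S : {pred M}) :
  submod_closed S -> forall (a : R) u, u \in S -> a *: u \in S.
Proof. by move=> [S0 SL] a u Su; rewrite -[_ *: _]addr0; apply: SL. Qed.

Lemma subD (R : comNzRingType) (M : lmodType R) (S : {pred M}) :
  submod_closed S -> forall u v, u \in S -> v \in S -> u + v \in S.
Proof. by move=> [S0 SL] u v Su Sv; rewrite -[u]scale1r; apply: SL. Qed.

Lemma subSum (R : comNzRingType) (M : lmodType R) (S : {pred M}) (I : Type)
  (s : seq I) (F : I -> M) :
  submod_closed S -> (forall i, F i \in S) -> \sum_(i <- s) F i \in S.
Proof.
move=> SC FS; elim: s => [|i s IH]; first by rewrite big_nil; case: SC.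
by rewrite big_cons; apply: subD.
Qed.

Lemma keyC (R : comNzRingType) (M N : lmodType R) (beta : M -> N -> R^o) :
  is_tensor_product beta ->
  forall (S : {pred M}), submod_closed S ->
  forall x, x \in S -> forall (n : N) (y : M), beta x n *: y \in S.
Proof.
move=> tb S SC x xS n y.
have [s E] := span1 tb.
have /choice [w hw] := wexists tb.
have ey : y = \sum_(p <- s) (p.1.1 * beta y p.2) *: w p.1.2.
  rewrite -{1}[y]scale1r.
  have -> : (1 : R) = \sum_(p <- s) p.1.1 * beta p.1.2 p.2 by exact: E.
  rewrite scaler_suml; apply: eq_bigr => p _.
  by rewrite -!scalerA hw.
rewrite ey scaler_sumr; apply: subSum => // p.
rewrite !scalerA mulrC -scalerA -hw.
by apply: subZ => //; apply: subZ.
Qed.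

Lemma main_avoid (R : comNzRingType) (M : lmodType R) :
  invertible_module M -> has_avoidance M.
Proof.
move=> [N [beta tb]] n Mk SC cover.
have [[bl br] _] := tb.
apply: contrapT => nex.
pose C k (r : R) := forall y : M, r *: y \in Mk k.
have iC k : ideal (C k).
  split.
  - by move=> y; rewrite scale0r; case: (SC k).
  - by move=> x y Cx Cy z; rewrite scalerDl; apply: subD.
  - by move=> r x Cx z; rewrite -scalerA; apply: subZ.
have nC1 k : ~ C k 1.
  by move=> C1; apply: nex; exists k => y; have := C1 y; rewrite scale1r.
have /choice [mm hmm] : forall k, exists m, maxideal m /\ forall x, C k x -> m x.
  by move=> k; apply: exists_max.
have [s E] := span1 tb.
have claim : forall j, (j <= n)%N ->
    exists x : M, forall k : 'I_n, (k < j)%N -> exists nn, ~ mm k (beta x nn).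
  elim=> [|j IH] jn; first by exists 0 => k.
  have [x hx] := IH (ltnW jn).
  pose kj := Ordinal jn.
  have mj := (hmm kj).1.
  case: (pselect (exists nn, ~ mm kj (beta x nn))) => [[nn hn]|hB].
    exists x => k; rewrite ltnS leq_eqVlt => /orP[/eqP kE|kl]; last exact: hx.
    by exists nn; have -> : k = kj by apply: val_inj.
  have hB' nn : mm kj (beta x nn).
    by apply: contrapT => hh; apply: hB; exists nn.
  have [p ps] : exists p : R * M * N, ~ mm kj (beta p.1.2 p.2).
    apply: contrapT => hp.
    case: (mj) => [[m0 mD mM] n1 _]; apply: n1.
    rewrite E; apply: ideal_sum; first by case: (hmm kj).1.
    by move=> q; apply: mM; apply: contrapT => hh; apply: hp; exists q.
  have [e [ne he]] : exists e, ~ mm kj e /\ forall k : 'I_n, (k < j)%N -> mm k e.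
    suff: forall i, (i <= j)%N -> exists e, ~ mm kj e /\ forall k : 'I_n, (k < i)%N -> mm k e.
      by apply.
    elim=> [|i IHi] ij.
      by exists 1; split => //; case: (mj).
    have [e [ne he]] := IHi (ltnW ij).
    have iln : (i < n)%N by apply: ltn_trans ij jn.
    pose ki := Ordinal iln.
    have [u [mu nu]] : exists u, mm ki u /\ ~ mm kj u.
      apply: contrapT => hh.
      have sub z : mm ki z -> mm kj z.
        by move=> mz; apply: contrapT => nz; apply: hh; exists z.
      have [nn hn] := hx ki ij.
      by apply: hn; apply: (max_incl (hmm ki).1 mj sub); exact: hB'.
    exists (e * u); split; first exact: max_prime.
    move=> k; rewrite ltnS leq_eqVlt => /orP[/eqP kE|kl].
      have -> : k = ki by apply: val_inj.
      by case: (hmm ki).1 => [[_ _ mM] _ _]; apply: mM.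
    case: (hmm k).1 => [[_ _ mM] _ _]; rewrite mulrC; apply: mM; exact: he.
  have eq nn : beta (x + e *: p.1.2) nn = beta x nn + e * beta p.1.2 nn.
    by rewrite addrC bl addrC.
  exists (x + e *: p.1.2) => k.
  rewrite ltnS leq_eqVlt => /orP[/eqP kE|kl].
    have -> : k = kj by apply: val_inj.
    exists p.2; rewrite eq => hh.
    apply: (max_prime mj ne ps).
    have -> : e * beta p.1.2 p.2 = (beta x p.2 + e * beta p.1.2 p.2) - beta x p.2.
      by rewrite addrC addKr.
    by apply: idealB => //; case: (mj).
  have [nn hn] := hx k kl; exists nn; rewrite eq => hh; apply: hn.
  have -> : beta x nn = (beta x nn + e * beta p.1.2 nn) - e * beta p.1.2 nn.
    by rewrite addrK.
  case: (hmm k).1 => [iI _ _]; apply: idealB => //.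
  by case: iI => [_ _ mM]; rewrite mulrC; apply: mM; exact: he.
have [x hx] := claim n (leqnn n).
have [k xk] := cover x.
have [nn hn] := hx k (ltn_ord k).
by apply: hn; apply: (hmm k).2 => y; exact: keyC.
Qed.

Theorem corollary3p3 (R T : comNzRingType) (iota : {rmorphism R -> T}) :
  is_total_ring_of_fractions iota ->
  trivial_Picard_group T ->
  forall M : lmodType R, invertible_module M -> has_avoidance M.
Proof. by move=> _ _ M; exact: main_avoid. Qed.
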